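(* Let $\mathcal{F}$ be a linear $3$-uniform family with $\Delta(\mathcal{F})=d$ and $\nu(\mathcal{F})=\nu$. Then $|\mathcal{F}|\leq \max\{2d\nu,10\nu\}$.
   Context: A family $\mathcal{F}$ is a finite collection of distinct subsets of a vertex set. It is $3$-uniform if every member has exactly $3$ elements, and linear if $|A\cap B|\leq 1$ for all distinct $A,B\in\mathcal{F}$. A matching is a collection of pairwise disjoint members; $\nu(\mathcal{F})$ is the maximum size of a matching. For a vertex $x$, $\mathcal{F}_x=\{A\in\mathcal{F}:x\in A\}$ and $\Delta(\mathcal{F})=\max_x|\mathcal{F}_x|$. *)

(* Defs.v *)
From mathcomp Require Import all_boot all_order.
Set Implicit Arguments. Unset Strict Implicit. Unset Printing Implicit Defensive.

Section Fam.
Variable T : finType.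

Definition uniform3 (F : {set {set T}}) : bool := [forall A in F, #|A| == 3].

Definition linear_fam (F : {set {set T}}) : bool :=
  [forall A in F, forall B in F, (A != B) ==> (#|A :&: B| <= 1)].

Definition is_matching (F M : {set {set T}}) : bool :=
  (M \subset F) && [forall A in M, forall B in M, (A != B) ==> [disjoint A & B]].

Definition nu (F : {set {set T}}) : nat :=
  \max_(M : {set {set T}} | is_matching F M) #|M|.

Definition star (F : {set {set T}}) (x : T) : {set {set T}} := [set A in F | x \in A].

Definition maxdeg (F : {set {set T}}) : nat := \max_(x : T) #|star F x|.
End Fam.

(* Main.v *)
Require Import Defs.
From mathcomp Require Import all_boot all_order.
From mathcomp Require Import zify.
Set Implicit Arguments. Unset Strict Implicit. Unset Printing Implicit Defensive.

Section Proof.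
Variable T : finType.
Implicit Types (F M : {set {set T}}) (A B C E X : {set T}).

Lemma matchingP F M : reflect (M \subset F /\ {in M &, forall A B, A != B -> [disjoint A & B]})
  (is_matching F M).
Proof.
apply: (iffP andP) => [[h1 /forallP h2]|[h1 h2]]; split => //.
- move=> A B hA hB hAB; move: (h2 A); rewrite hA /= => /forallP /(_ B).
  by rewrite hB /= hAB.
- apply/forallP => A; apply/implyP => hA; apply/forallP => B; apply/implyP => hB.
  by apply/implyP; apply: h2.
Qed.

Lemma matching_sub F M M' : is_matching F M -> M' \subset M -> is_matching F M'.
Proof.
move=> /matchingP [h1 h2] hs; apply/matchingP; split; first exact: subset_trans hs h1.
by move=> A B hA hB; apply: h2; apply: (subsetP hs).
Qed.

Lemma matching_ext F M X : is_matching F M -> X \in F ->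
  (forall E, E \in M -> [disjoint X & E]) -> is_matching F (X |: M).
Proof.
move=> /matchingP [h1 h2] hX hd; apply/matchingP; split.
  by rewrite subUset sub1set hX h1.
move=> A B; rewrite !in_setU1 => /orP[/eqP->|hA] /orP[/eqP->|hB] hne.
- by rewrite eqxx in hne.
- exact: hd.
- by rewrite disjoint_sym; apply: hd.
- exact: h2.
Qed.


Variables (F M : {set {set T}}).
Hypotheses (hu : uniform3 F) (hl : linear_fam F) (hM : is_matching F M)
  (hmax : forall M', is_matching F M' -> #|M'| <= #|M|).
Let V := cover M.

Lemma card3 E : E \in F -> #|E| = 3.
Proof. by move=> hE; move/forallP: hu => /(_ E); rewrite hE => /eqP. Qed.

Lemma lin E E' : E \in F -> E' \in F -> E != E' -> #|E :&: E'| <= 1.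
Proof.
move=> hE hE' hne; move/forallP: hl => /(_ E); rewrite hE /= => /forallP /(_ E').
by rewrite hE' hne.
Qed.

Lemma inMF A : A \in M -> A \in F.
Proof. by move: hM => /matchingP [h _] /(subsetP h). Qed.

Lemma inMV A : A \in M -> A \subset V.
Proof. by move=> hA; apply: bigcup_sup. Qed.

Lemma mdisj A B : A \in M -> B \in M -> A != B -> [disjoint A & B].
Proof. by move: hM => /matchingP [_ h]; apply: h. Qed.

Lemma notinM E : E \in F -> #|E :&: V| < 3 -> E \notin M.
Proof.
move=> hE hc; apply/negP => hEM; move: hc.
by rewrite (setIidPl (inMV hEM)) card3.
Qed.

Lemma meetV E : E \in F -> 0 < #|E :&: V|.
Proof.
move=> hE; rewrite lt0n; apply/negP => /eqP /eqP; rewrite cards_eq0 => /eqP h0.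
have hnM : E \notin M by apply: notinM; rewrite // h0 cards0.
have : is_matching F (E |: M).
  apply: matching_ext => // A hA; rewrite -setI_eq0 -subset0 -h0.
  by apply: setIS; apply: inMV.
by move/hmax; rewrite cardsU1 hnM add1n ltnn.
Qed.

Lemma swap A x y B C : A \in M -> x \in A -> y \in A -> x != y ->
  B \in F -> C \in F -> B :&: V = [set y] -> C :&: V = [set x] ->
  [disjoint B & C] -> False.
Proof.
move=> hA hx hy hxy hB hC hBV hCV hBC.
have hAV := inMV hA.
have hyB : y \in B by move: (set11 y); rewrite -hBV inE => /andP[].
have hyC : y \notin C.
  apply/negP => hyC; have : y \in C :&: V by rewrite inE hyC (subsetP hAV).
  by rewrite hCV inE eq_sym (negbTE hxy).
have hBM : B \notin M by apply: notinM; rewrite // hBV cards1.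
have hCM : C \notin M by apply: notinM; rewrite // hCV cards1.
have away X z : X :&: V = [set z] -> z \in A ->
   forall E, E \in M :\ A -> [disjoint X & E].
  move=> hXV hz E; rewrite in_setD1 => /andP[hEA hE].
  rewrite -setI_eq0 -subset0; apply/subsetP => w; rewrite inE => /andP[hwX hwE].
  have : w \in X :&: V by rewrite inE hwX (subsetP (inMV hE)).
  rewrite hXV inE => /eqP hw; subst w.
  have hAE : A != E by rewrite eq_sym.
  by rewrite (disjointFr (mdisj hA hE hAE) hz) in hwE.
have m1 : is_matching F (M :\ A) by apply: matching_sub hM _; apply: subD1set.
have m2 : is_matching F (C |: (M :\ A)).
  by apply: matching_ext => //; apply: (away C x).
have m3 : is_matching F (B |: (C |: (M :\ A))).
  apply: matching_ext => // E; rewrite in_setU1 => /orP[/eqP->|]; first by [].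
  exact: (away B y).
have hBn : B \notin C |: (M :\ A).
  rewrite in_setU1 negb_or; apply/andP; split.
    by apply/negP => /eqP hBC'; rewrite -hBC' hyB in hyC.
  by rewrite in_setD1 negb_and hBM orbT.
have hCn : C \notin M :\ A by rewrite in_setD1 negb_and hCM orbT.
move/hmax: m3; rewrite cardsU1 hBn cardsU1 hCn.
by move: (cardsD1 A M); rewrite hA => ->; rewrite !add1n ltnS ltnn.
Qed.

Definition priv x := [set E in star F x | #|E :&: V| == 1].

Lemma privP x E : x \in V -> E \in priv x -> [/\ E \in F, x \in E & E :&: V = [set x]].
Proof.
move=> hxV; rewrite !inE => /andP[/andP[hE hxE] /cards1P [z hz]].
split => //; have : x \in E :&: V by rewrite inE hxE hxV.
by rewrite hz inE => /eqP <-.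
Qed.

Lemma key A x y : A \in M -> x \in A -> y \in A -> x != y -> 0 < #|priv y| ->
  #|priv x| <= 2.
Proof.
move=> hA hx hy hxy /card_gt0P [B hBp].
have hAV := inMV hA.
have hxV : x \in V := subsetP hAV x hx.
have hyV : y \in V := subsetP hAV y hy.
have [hB hyB hBV] := privP hyV hBp.
set B' := B :\ y.
have hB' : #|B'| = 2 by move: (cardsD1 y B); rewrite hyB card3 // add1n => -[].
have hxB : x \notin B.
  apply/negP => hxB; have : x \in B :&: V by rewrite inE hxB hxV.
  by rewrite hBV inE (negbTE hxy).
have meet C : C \in priv x -> {w | w \in C :&: B'}.
  move=> hCp; have [hC hxC hCV] := privP hxV hCp.
  case: (set_0Vmem (C :&: B')) => [h0|//]; exfalso.
  apply: (swap hA hx hy hxy hB hC hBV hCV).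
  rewrite -setI_eq0 -subset0; apply/subsetP => w; rewrite inE => /andP[hwB hwC].
  case: (eqVneq w y) => [hwy|hwy].
    subst w; have : y \in C :&: V by rewrite inE hwC hyV.
    by rewrite hCV inE eq_sym (negbTE hxy).
  by rewrite -h0 inE hwC /B' !inE hwy hwB.
pose f C := odflt y [pick w in C :&: B'].
have hf C : C \in priv x -> f C \in C :&: B'.
  move=> hCp; rewrite /f; case: pickP => [w hw|hn] //=.
  by case: (meet C hCp) => w hw; rewrite hn in hw.
have inj : {in priv x &, injective f}.
  move=> C C' hC hC' hfe; apply/eqP; apply: contraT => hne.
  have [hCF hxC _] := privP hxV hC.
  have [hC'F hxC' _] := privP hxV hC'.
  have := hf C hC; have := hf C' hC'; rewrite -hfe.
  rewrite !inE => /andP[hzC' /andP[hzy hzB]] /andP[hzC _].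
  have hxz : x != f C by apply/negP => /eqP hxz; rewrite hxz hzB in hxB.
  have := lin hCF hC'F hne.
  have : [set x; f C] \subset C :&: C'.
    by apply/subsetP => w; rewrite !inE => /orP[]/eqP->; rewrite ?hxC ?hxC' ?hzC ?hzC'.
  move/subset_leq_card; rewrite cards2 hxz => h1 h2.
  by have := leq_trans h1 h2.
rewrite -(card_in_imset inj) -hB'; apply: subset_leq_card.
apply/subsetP => w /imsetP [C hC ->].
by move: (hf C hC); rewrite inE => /andP[].
Qed.

Definition w E := 6 %/ #|E :&: V|.
Definition W x := \sum_(E in star F x) w E.

Lemma krange E : E \in F -> 0 < #|E :&: V| <= 3.
Proof.
move=> hE; rewrite meetV //= -(card3 hE); apply: subset_leq_card; exact: subsetIl.
Qed.

Lemma wk E : E \in F -> #|E :&: V| * w E = 6.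
Proof.
move=> hE; move: (krange hE); rewrite /w; case: #|E :&: V| => [|[|[|[|k]]]] //.
Qed.

Lemma total : 6 * #|F| = \sum_(x in V) W x.
Proof.
rewrite /W (exchange_big_dep (fun E => E \in F)); last by move=> x E _; rewrite inE => /andP[].
rewrite /= mulnC -sum_nat_const; apply: eq_bigr => E hE.
rewrite -(wk hE) -sum_nat_const; apply: eq_bigl => x.
by rewrite !inE hE andbC.
Qed.

Lemma Wbound A x : A \in M -> x \in A -> W x + 1 <= 3 * #|star F x| + 3 * #|priv x|.
Proof.
move=> hA hx.
have hAs : A \in star F x by rewrite inE inMF.
have h : \sum_(E in star F x) (w E + (E == A)) <=
         \sum_(E in star F x) (3 + (#|E :&: V| == 1) * 3).
  apply: leq_sum => E; rewrite inE => /andP[hE _].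
  move: (krange hE); rewrite /w.
  case: (eqVneq E A) => [->|hEA].
    by rewrite (setIidPl (inMV hA)) card3 ?inMF.
  by case: #|E :&: V| => [|[|[|[|k]]]].
have e1 : #|priv x| = \sum_(E in star F x) (#|E :&: V| == 1).
  rewrite -sum1_card (eq_bigl (fun E => (E \in star F x) && (#|E :&: V| == 1))).
    by rewrite big_mkcondr /=; apply: eq_bigr => E _; case: (_ == 1).
  by move=> E; rewrite !inE.
have e3 : \sum_(E in star F x) (#|E :&: V| == 1) * 3 = #|priv x| * 3.
  by rewrite e1 big_distrl.
move: h; rewrite !big_split /= sum_nat_const e3.
have e2 : \sum_(E in star F x) (E == A) = 1.
  rewrite (bigD1 A) //= eqxx big1 // => E /andP[_ /negbTE ->] //.
rewrite e2.
by rewrite /W [3 * #|star F x|]mulnC [3 * #|priv x|]mulnC.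
Qed.

Lemma edge_bound A d : A \in M -> (forall x, #|star F x| <= d) ->
  \sum_(x in A) W x <= maxn (12 * d) 60.
Proof.
move=> hA hd.
have hA3 : #|A| = 3 by rewrite card3 ?inMF.
have h1 : \sum_(x in A) (W x + 1) <= \sum_(x in A) (3 * d + #|priv x| * 3).
  apply: leq_sum => x hx; apply: leq_trans (Wbound hA hx) _.
  by have := hd x; lia.
set P := \sum_(x in A) #|priv x|.
have eP : \sum_(x in A) #|priv x| * 3 = P * 3 by rewrite big_distrl.
move: h1; rewrite !big_split /= !sum_nat_const eP hA3.
have hP : P <= 6 \/ P.+1 <= d.
  case: (boolP [exists x in A, exists y in A, (x != y) && (0 < #|priv x|) && (0 < #|priv y|)]).
    move=> /existsP [x /andP[hx /existsP [y /andP [hy /andP[/andP[hxy hpx] hpy]]]]].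
    left; have -> : 6 = \sum_(z in A) 2 by rewrite sum_nat_const hA3.
    apply: leq_sum => z hz; case: (posnP #|priv z|) => [->//|hpz].
    case: (eqVneq z y) => [hzy|hzy]; first last.
      exact: key hA hz hy hzy hpy.
    subst z; apply: key hA hy hx _ hpx; by rewrite eq_sym.
  move=> hn; right.
  case: (boolP [exists x in A, 0 < #|priv x|]).
    move=> /existsP [x0 /andP [hx0 hp0]].
    have -> : P = #|priv x0|.
      rewrite /P (bigD1 x0) //= big1 ?addn0 // => x /andP[hx hxx0].
      apply/eqP; rewrite -leqn0 leqNgt; apply/negP => hpx.
      move/negP: hn; apply; apply/existsP; exists x0; rewrite hx0 /=.
      by apply/existsP; exists x; rewrite hx eq_sym hxx0 hp0 hpx.
    apply: leq_trans (hd x0).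
    have hAn : A \notin priv x0.
      by rewrite !inE (setIidPl (inMV hA)) card3 ?inMF // andbF.
    apply: leq_trans (_ : #|A |: priv x0| <= _); first by rewrite cardsU1 hAn.
    apply: subset_leq_card; apply/subsetP => E.
    rewrite in_setU1 => /orP[/eqP->|]. by rewrite !inE inMF // hx0. by rewrite !inE => /andP[].
  move=> hn2.
  have -> : P = 0.
    rewrite /P big1 // => x hx; apply/eqP; rewrite -leqn0 leqNgt; apply/negP => hpx.
    by move/negP: hn2; apply; apply/existsP; exists x; rewrite hx hpx.
  have : 0 < #|A| by rewrite hA3.
  case/card_gt0P => x hx; apply: leq_trans (hd x).
  by apply/card_gt0P; exists A; rewrite inE inMF.
case: hP => hP; lia.
Qed.

Lemma bound d : (forall x, #|star F x| <= d) -> 6 * #|F| <= #|M| * maxn (12 * d) 60.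
Proof.
move=> hd; rewrite total /V big_trivIset; last first.
  by apply/trivIsetP => A B hA hB; apply: mdisj.
rewrite -sum_nat_const; apply: leq_sum => A hA; exact: edge_bound.
Qed.

End Proof.

Theorem theorem3 (T : finType) (F : {set {set T}}) (d v : nat) :
  uniform3 F -> linear_fam F -> maxdeg F = d -> nu F = v ->
  #|F| <= maxn (2 * d * v) (10 * v).
Proof.
move=> hu hl hd hv.
have m0 : is_matching F set0.
  by apply/matchingP; split; [exact: sub0set | move=> A B; rewrite inE].
have [M hM hMmax] : {M | is_matching F M & nu F = #|M|}.
  rewrite /nu; have := @eq_bigmax_cond _ (is_matching F) (fun M => #|M|).
  case => [|M hM ->]; [by apply/card_gt0P; exists set0 | by exists M].
have hmax M' : is_matching F M' -> #|M'| <= #|M|.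
  by rewrite -hMmax /nu => h; apply: leq_bigmax_cond.
have hdeg x : #|star F x| <= d.
  by rewrite -hd /maxdeg; apply: leq_bigmax.
have := bound hu hl hM hmax hdeg.
rewrite -hMmax hv => h.
case: (leqP 5 d) => h5.
  have e1 : maxn (12 * d) 60 = 12 * d by apply/maxn_idPl; lia.
  have e2 : maxn (2 * d * v) (10 * v) = 2 * d * v.
    by apply/maxn_idPl; nia.
  rewrite e1 e2 in h *; lia.
have e1 : maxn (12 * d) 60 = 60 by apply/maxn_idPr; lia.
rewrite e1 in h; apply: leq_trans (leq_maxr _ _); lia.
Qed.
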